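(* Let $\tilde\omega=(\ell_1/t_1,\dots,\ell_\nu/t_\nu)\in\mathbb Q^\nu\setminus\{0\}$ with $\ell_j\in\mathbb Z$, $t_j\in\mathbb Z_{\ge1}$. Suppose $0<a_0<1$, $\nu<b_0<\infty$, $\bar R_0>0$ with $\bar R_0^{\,b_0}>\prod_jt_j$, and $|n\cdot\tilde\omega|\ge a_0|n|^{-b_0}$ for all $n\in\mathbb Z^\nu$ with $0<|n|\le\bar R_0$. Then $|\mathfrak n\tilde\omega|\ge a_0|\mathfrak n|^{-b_0}$ for every $\mathfrak n\in\mathfrak Z(\tilde\omega)\setminus\{0\}$.
   Context: $|\cdot|$ is a fixed norm on $\mathbb R^\nu$ restricted to $\mathbb Z^\nu$, and $n\cdot\tilde\omega$ is the usual dot product. $\mathfrak N(\tilde\omega)=\{n\in\mathbb Z^\nu:n\cdot\tilde\omega=0\}$ and $\mathfrak Z(\tilde\omega)=\mathbb Z^\nu/\mathfrak N(\tilde\omega)$. For a coset $\mathfrak n$, $|\mathfrak n|=\min\{|n|:n\in\mathfrak n\}$ and $\mathfrak n\tilde\omega:=n\cdot\tilde\omega$ for any $n\in\mathfrak n$ (independent of the choice). *)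

(* Defs.v *)
From Stdlib Require Import Reals List.
Open Scope R_scope.

(* Vectors of R^nu are represented as functions nat -> R; only the
   coordinates 0..nu-1 are meaningful.  Integer vectors (Z^nu) are
   functions nat -> Z. *)

Fixpoint rsum (nu : nat) (f : nat -> R) : R :=
  match nu with
  | O => 0
  | S k => rsum k f + f k
  end.

Fixpoint rprod (nu : nat) (f : nat -> R) : R :=
  match nu with
  | O => 1
  | S k => rprod k f * f k
  end.

Definition zvec (n : nat -> Z) : nat -> R := fun i => IZR (n i).

Definition dot (nu : nat) (x y : nat -> R) : R := rsum nu (fun i => x i * y i).

Definition is_norm (nu : nat) (N : (nat -> R) -> R) : Prop :=
  (forall x y, (forall i, (i < nu)%nat -> x i = y i) -> N x = N y) /\
  (forall x, 0 <= N x) /\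
  (forall x, N x = 0 -> forall i, (i < nu)%nat -> x i = 0) /\
  (forall c x, N (fun i => c * x i) = Rabs c * N x) /\
  (forall x y, N (fun i => x i + y i) <= N x + N y).

(* The coset of n in Z^nu / N(omega): all m with (m - n).omega = 0,
   i.e. m.omega = n.omega.  [r] is the norm of the coset:
   r = min { N m : m in the coset of n }. *)
Definition is_coset_norm (nu : nat) (N : (nat -> R) -> R) (omega : nat -> R)
    (n : nat -> Z) (r : R) : Prop :=
  (exists m : nat -> Z,
      dot nu (zvec m) omega = dot nu (zvec n) omega /\ N (zvec m) = r) /\
  (forall m : nat -> Z,
      dot nu (zvec m) omega = dot nu (zvec n) omega -> r <= N (zvec m)).

(* Main.v *)
Require Import Defs.
From Stdlib Require Import Reals Lra Lia.
Open Scope R_scope.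

Lemma int_lemma (l t n : nat -> Z) : forall k,
  (forall j, (j < k)%nat -> (1 <= t j)%Z) ->
  exists p z : Z, (1 <= p)%Z /\ rprod k (fun j => IZR (t j)) = IZR p /\
    dot k (zvec n) (fun j => IZR (l j) / IZR (t j)) * IZR p = IZR z.
Proof.
  induction k as [|k IH]; intros Ht.
  - exists 1%Z, 0%Z. unfold dot; simpl. split; [lia|split; [reflexivity|ring]].
  - destruct IH as [p [z [Hp [HP Hz]]]].
    { intros j Hj; apply Ht; lia. }
    assert (Htk : (1 <= t k)%Z) by (apply Ht; lia).
    exists (p * t k)%Z, (z * t k + n k * l k * p)%Z.
    split; [lia|]. unfold dot in *; simpl. rewrite HP. split.
    + rewrite mult_IZR; reflexivity.
    + assert (IZR (t k) <> 0) by (apply not_0_IZR; lia).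
      rewrite !plus_IZR, !mult_IZR, <- Hz. unfold zvec. field. auto.
Qed.

Lemma dot_zero nu (x w : nat -> R) :
  (forall i, (i < nu)%nat -> x i = 0) -> dot nu x w = 0.
Proof.
  unfold dot; induction nu; intros H; simpl; [reflexivity|].
  rewrite IHnu. rewrite H by lia. ring. intros; apply H; lia.
Qed.

Theorem mainTheorem8
  (nu : nat) (N : (nat -> R) -> R) (HN : is_norm nu N)
  (l t : nat -> Z)
  (Ht : forall j, (j < nu)%nat -> (1 <= t j)%Z)
  (Hnz : exists j, (j < nu)%nat /\ l j <> 0%Z)
  (a0 b0 R0 : R)
  (Ha0 : 0 < a0 < 1) (Hb0 : INR nu < b0) (HR0 : 0 < R0)
  (HR0b : Rpower R0 b0 > rprod nu (fun j => IZR (t j)))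
  (Hdio : forall n : nat -> Z, 0 < N (zvec n) <= R0 ->
     Rabs (dot nu (zvec n) (fun j => IZR (l j) / IZR (t j)))
       >= a0 * Rpower (N (zvec n)) (- b0)) :
  forall (n : nat -> Z) (r : R),
    dot nu (zvec n) (fun j => IZR (l j) / IZR (t j)) <> 0 ->
    is_coset_norm nu N (fun j => IZR (l j) / IZR (t j)) n r ->
    Rabs (dot nu (zvec n) (fun j => IZR (l j) / IZR (t j)))
      >= a0 * Rpower r (- b0).
Proof.
  intros n r Hd [[m [Hm HNm]] _].
  destruct HN as [_ [Hpos [Hdef _]]].
  assert (Hr : 0 < r).
  { rewrite <- HNm. destruct (Hpos (zvec m)) as [h|h]; [exact h|].
    exfalso. apply Hd. rewrite <- Hm. apply dot_zero. apply Hdef; auto. }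
  destruct (Rle_or_lt r R0) as [Hle|Hlt].
  - rewrite <- Hm, <- HNm. apply Hdio. rewrite HNm; lra.
  - destruct (int_lemma l t n nu Ht) as [p [z [Hp [HP Hz]]]].
    set (D := dot nu (zvec n) (fun j => IZR (l j) / IZR (t j))) in *.
    assert (HpR : 1 <= IZR p) by (apply IZR_le; lia).
    assert (Hz0 : z <> 0%Z).
    { intro E; subst z. apply Hd. apply Rmult_eq_reg_r with (IZR p); [|lra].
      rewrite Hz. ring. }
    assert (Hzabs : 1 <= Rabs (IZR z)).
    { rewrite <- abs_IZR. apply IZR_le. lia. }
    assert (HD : 1 / IZR p <= Rabs D).
    { rewrite <- Hz, Rabs_mult, (Rabs_right (IZR p)) in Hzabs by lra.
      apply Rmult_le_reg_r with (IZR p); [lra|]. field_simplify; lra. }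
    assert (Hb : 0 < b0).
    { pose proof (pos_INR nu); lra. }
    assert (H1 : Rpower r (- b0) < Rpower R0 (- b0)).
    { unfold Rpower. apply exp_increasing.
      assert (ln R0 < ln r) by (apply ln_increasing; lra). nra. }
    assert (H2 : Rpower R0 (- b0) < 1 / IZR p).
    { rewrite Rpower_Ropp. rewrite HP in HR0b.
      unfold Rdiv. rewrite Rmult_1_l. apply Rinv_lt_contravar; [|lra].
      apply Rmult_lt_0_compat; lra. }
    assert (H3 : 0 < Rpower r (- b0)) by (unfold Rpower; apply exp_pos).
    apply Rle_ge. nra.
Qed.
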